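(* Let $n\ge 3$, let $a_0,\ldots,a_{n-1}$ be indeterminates over $\mathbb{Q}$ and $f=x^n+a_{n-1}x^{n-1}+\cdots+a_0$. For each integer $m$ put $\varphi_m(x)=f^{(m)}(x)/m!$ if $1\le m\le n$ and $\varphi_m=0$ if $m\le 0$ or $m>n$. Let $M$ be the infinite matrix with entries $M_{2s-1,l}=\varphi_{2(l-s)+2}$, $M_{2s,l}=\varphi_{2(l-s)+1}$ ($s,l\ge 1$), and let $H$ be its $(n-2)$th leading principal minor. Then $\deg(H,x)=(n-1)(n-2)/2$.
   Context: $f^{(m)}$ is the $m$th derivative of $f$ with respect to $x$; $\deg(H,x)$ is the degree of $H$ as a polynomial in $x$ with coefficients in $\mathbb{Q}[a_0,\ldots,a_{n-1}]$. *)

(* Defs.v *)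
From HB Require Import structures.
From mathcomp Require Import all_boot all_order all_algebra.
From mathcomp Require Import mpoly.
Set Implicit Arguments. Unset Strict Implicit. Unset Printing Implicit Defensive.
Import Order.TTheory GRing.Theory Num.Theory.
Local Open Scope ring_scope.

(* Coefficient ring Q[a_0,...,a_{n-1}]: a_i is the variable 'X_i. *)
Definition coefR (n : nat) := {mpoly rat[n]}.

Definition fpoly (n : nat) : {poly {mpoly rat[n]}} :=
  'X^n + \sum_(i < n) ('X_i : {mpoly rat[n]})%:P * 'X^i.

(* phi_m = f^(m)/m! for 1 <= m <= n, and 0 otherwise.
   p^`N(m) is the formal m-th derivative divided by m!. *)
Definition phi (n : nat) (m : int) : {poly {mpoly rat[n]}} :=
  match m with
  | Posz k => if (1 <= k <= n)%N then (fpoly n)^`N(k) else 0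
  | Negz _ => 0
  end.

(* Entry M_{i,l} of the infinite matrix (1-based indices i, l >= 1):
   M_{2s-1,l} = phi_{2(l-s)+2},  M_{2s,l} = phi_{2(l-s)+1}. *)
Definition Mentry (n : nat) (i l : nat) : {poly {mpoly rat[n]}} :=
  if odd i then
    let s := (i.+1)./2 in phi n (2 * (Posz l - Posz s) + 2)%R
  else
    let s := i./2 in phi n (2 * (Posz l - Posz s) + 1)%R.

Definition Hminor (n : nat) : {poly {mpoly rat[n]}} :=
  \det (\matrix_(i < n - 2, j < n - 2) Mentry n i.+1 j.+1).

(* Main.v *)
Require Import Defs.
From HB Require Import structures.
From mathcomp Require Import all_boot all_order all_algebra all_field.
From mathcomp Require Import mpoly.
From mathcomp Require Import zify ring.
Import GRing.Theory Num.Theory.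
Local Open Scope ring_scope.

Lemma Mentry_eq n i l : Mentry n i l = phi n (2 * (l:int) - (i:int) + 1).
Proof.
rewrite /Mentry; case: ifP => hi; congr (phi n _).
- have h : ((i.+1)./2 * 2 = i.+1)%N.
    by rewrite -{2}(odd_double_half i.+1) /= hi /= -mul2n mulnC.
  have h' : ((i.+1)./2 : int) * 2 = (i : int) + 1.
    by lia.
  rewrite mulrBr; lia.
- have h : (i./2 * 2 = i)%N.
    by rewrite -{2}(odd_double_half i) /= hi /= -mul2n mulnC.
  have h' : ((i./2 : nat) : int) * 2 = (i : int).
    by lia.
  rewrite mulrBr; lia.
Qed.

Definition mm (i j : nat) : int := 2 * (j:int) - (i:int) + 2.

Definition Lq (n : nat) (i j : nat) : rat :=
  match mm i j with
  | Posz m => if (1 <= m <= n)%N then ('C(n, m))%:R else 0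
  | Negz _ => 0
  end.

Lemma fpoly_coef n k : (n <= k)%N -> (fpoly n)`_k = (k == n)%:R.
Proof.
move=> hk; rewrite /fpoly coefD coefXn coef_sum big1 ?addr0 // => i _.
by rewrite coefCM coefXn gtn_eqF ?mulr0 //; apply: leq_trans (ltn_ord i) hk.
Qed.

Lemma entry_top n i j k : (i < n - 2)%N -> (j < n - 2)%N ->
  (2 * (n - 2) - 1 <= k)%N ->
  (phi n (mm i j) * 'X^(n - 2 - 1 - i + 2 * j))`_k =
     (k == 2 * (n - 2) - 1)%N%:R * (Lq n i j)%:MP.
Proof.
move=> hi hj hk; rewrite /Lq /phi.
case E: (mm i j) => [m|m]; last by rewrite mul0r coef0 mpolyC0 mulr0.
case: ifP => hm; last by rewrite mul0r coef0 mpolyC0 mulr0.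
have hm' : (m + i = 2 * j + 2)%N.
  by move: E; rewrite /mm => E; lia.
rewrite coefMXn ifN; last by lia.
rewrite coef_nderivn fpoly_coef; last by lia.
have -> : (m + (k - (n - 2 - 1 - i + 2 * j)) == n)%N = (k == 2 * (n - 2) - 1)%N.
  by apply/eqP/eqP; lia.
case: eqP => hk'; last by rewrite mul0rn mul0r.
have -> : (m + (k - (n - 2 - 1 - i + 2 * j)) = n)%N by lia.
by rewrite mul1r mpolyC_nat.
Qed.

Section TopCoef.
Variable R : comNzRingType.

Definition topc (K : nat) (p : {poly R}) (c : R) :=
  forall k, (K <= k)%N -> p`_k = (k == K)%:R * c.

Lemma topc_mul a b p q c d : topc a p c -> topc b q d -> topc (a + b) (p * q) (c * d).
Proof.
move=> hp hq k hk; rewrite coefM.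
have ha : (a < k.+1)%N by lia.
rewrite (bigD1 (Ordinal ha)) //= big1 ?addr0.
  rewrite hp // hq; last by lia.
  rewrite eqxx mul1r.
  have -> : (k - a == b)%N = (k == a + b)%N by apply/eqP/eqP; lia.
  by case: (k == a + b); rewrite ?mul1r ?mul0r ?mulr0 ?mulr1 ?mul1r.
move=> j /= hj.
have hj' : val j != a by apply: contra hj => /eqP h; apply/eqP/val_inj.
case: (ltngtP j a) => h.
- rewrite (hq (k - j)%N); last by lia.
  have -> : (k - j == b)%N = false by apply/eqP; lia.
  by rewrite mul0r mulr0.
- by rewrite hp ?(ltnW h) // gtn_eqF // mul0r mul0r.
- by case/eqP: hj'.
Qed.

Lemma topc_add K p q c d : topc K p c -> topc K q d -> topc K (p + q) (c + d).
Proof. by move=> hp hq k hk; rewrite coefD hp // hq // mulrDr. Qed.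

Lemma topc0 K : topc K 0 0.
Proof. by move=> k _; rewrite coef0 mulr0. Qed.

Lemma topc1 : topc 0 1 1.
Proof. by move=> k _; rewrite coef1 mulr1. Qed.

Lemma topc_sign (b : bool) : topc 0 ((-1) ^+ b) ((-1) ^+ b).
Proof.
move=> k _; rewrite -(rmorph_sign (@polyC R)) coefC.
by case: (k == 0)%N; rewrite ?mul1r ?mul0r.
Qed.

Lemma topc_prod (I : Type) (r : seq I) K (F : I -> {poly R}) (l : I -> R) :
  (forall i, topc K (F i) (l i)) ->
  topc (size r * K) (\prod_(i <- r) F i) (\prod_(i <- r) l i).
Proof.
move=> hF; elim: r => [|x r IH]; first by rewrite !big_nil mul0n; exact: topc1.
by rewrite !big_cons mulSn; apply: topc_mul.
Qed.

Lemma topc_det N K (B : 'M[{poly R}]_N) (L : 'M[R]_N) :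
  (forall i j, topc K (B i j) (L i j)) -> topc (N * K) (\det B) (\det L).
Proof.
move=> hB; rewrite /determinant.
apply: (big_ind2 (topc (N * K))); first exact: topc0.
  by move=> ? ? ? ?; apply: topc_add.
move=> s _; rewrite -[(N * K)%N]add0n; apply: topc_mul; first exact: topc_sign.
have -> : (N * K = size (index_enum 'I_N) * K)%N.
  by rewrite /index_enum -enumT size_enum_ord.
by apply: topc_prod => i; exact: hB.
Qed.

End TopCoef.
Arguments topc {R}.

Lemma sum_id N : (2 * \sum_(i < N) i = N * (N - 1))%N.
Proof.
elim: N => [|N IH]; first by rewrite big_ord0.
rewrite big_ord_recr /= mulnDr IH; nia.
Qed.

Lemma sum_rev N : (\sum_(i < N) (N - 1 - i) = \sum_(i < N) i)%N.
Proof.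
elim: N => [|N IH]; first by rewrite !big_ord0.
rewrite big_ord_recl big_ord_recr /=.
have -> : (\sum_(i < N) (N.+1 - 1 - lift ord0 i) = \sum_(i < N) (N - 1 - i))%N.
  by apply: eq_bigr => i _; rewrite lift0; lia.
rewrite IH [X in _ = X]addnC; congr (_ + _); rewrite /= subn0 subSS subn0 //.
Qed.

Lemma ar1 N c : (2 * c = N * (N - 1))%N -> (3 * c <= N * (2 * N - 1))%N.
Proof.
rewrite !mulnBr !muln1 mulnCA => h.
have : (N <= N * N)%N by case: N {h} => [|N] //; rewrite leq_pmull.
lia.
Qed.
Lemma ar2 n c : (3 <= n)%N -> (2 * c = (n-2) * ((n-2) - 1))%N -> ((n - 1) * (n-2) = ((n-2) * (2 * (n-2) - 1) - 3 * c) * 2)%N.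
Proof.
move=> hn; set N := (n - 2)%N.
have -> : (n - 1 = N + 1)%N by rewrite /N; lia.
rewrite !mulnBr !muln1 mulnCA mulnDl mul1n => h.
have : (N <= N * N)%N by case: N {h} => [|N] //; rewrite leq_pmull.
lia.
Qed.

Lemma det_reindex (R : idomainType) m k (A : 'M[R]_m) (B : 'M[R]_k)
  (f g : 'I_m -> 'I_k) : injective f -> injective g ->
  (forall i j, A i j = B (f i) (g j)) -> m = k -> (\det A == 0) = (\det B == 0).
Proof.
move=> hf hg hAB e; subst k.
have -> : A = row_perm (perm.perm hf) (col_perm (perm.perm hg) B).
  by apply/matrixP => i j; rewrite !mxE !perm.permE hAB.
rewrite row_permE col_permE !det_mulmx !det_perm !mulf_eq0 !signr_eq0 /=.
by rewrite orbF.
Qed.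

Lemma Lq_pos n i j m : mm i j = Posz m.+1 -> Lq n i j = ('C(n, m.+1))%:R.
Proof.
rewrite /Lq => ->; case: ifP => // h.
by rewrite bin_small //; lia.
Qed.

Lemma Lq_le0 n i j : mm i j <= 0 -> Lq n i j = 0.
Proof.
rewrite /Lq; case: (mm i j) => // m h.
by case: m h.
Qed.

Lemma sum_split (V : zmodType) (F : nat -> V) n :
  \sum_(k < 2 * n) F k = \sum_(r < n) F (2 * r)%N + \sum_(r < n) F (2 * r).+1.
Proof.
elim: n => [|n IH]; first by rewrite !big_ord0 addr0.
rewrite (_ : (2 * n.+1 = (2 * n).+2)%N); last by lia.
by rewrite !big_ord_recr /= IH -!addrA; congr (_ + _); rewrite addrCA.
Qed.

Definition Ep n : {poly rat} := \poly_(r < ((n - 1) %/ 2).+1) ('C(n, (2 * r).+1))%:R.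
Definition Op n : {poly rat} := \poly_(r < ((n - 2) %/ 2).+1) ('C(n, (2 * r).+2))%:R.

Lemma coefEp n r : (Ep n)`_r = ('C(n, (2 * r).+1))%:R.
Proof. by rewrite coef_poly; case: ifP => // h; rewrite bin_small //; lia. Qed.

Lemma coefOp n r : (Op n)`_r = ('C(n, (2 * r).+2))%:R.
Proof. by rewrite coef_poly; case: ifP => // h; rewrite bin_small //; lia. Qed.

Lemma sizeEp n : (1 <= n)%N -> size (Ep n) = ((n - 1) %/ 2).+1.
Proof.
move=> hn; rewrite size_poly_eq //= pnatr_eq0 -lt0n bin_gt0; lia.
Qed.

Lemma sizeOp n : (2 <= n)%N -> size (Op n) = ((n - 2) %/ 2).+1.
Proof.
move=> hn; rewrite size_poly_eq //= pnatr_eq0 -lt0n bin_gt0; lia.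
Qed.

Lemma hornerEC n (x : algC) :
  (map_poly ratr (Ep n)).[x] = \sum_(r < n) ('C(n, (2 * r).+1))%:R * x ^+ r.
Proof.
have -> : map_poly ratr (Ep n) = \poly_(r < n) ('C(n, (2 * r).+1))%:R :> {poly algC}.
  apply/polyP => r; rewrite coef_map coefEp coef_poly.
  case: ifP => h; first exact: ratr_nat.
  rewrite bin_small; last by lia.
  exact: ratr_nat.
by rewrite horner_poly.
Qed.

Lemma hornerOC n (x : algC) :
  (map_poly ratr (Op n)).[x] = \sum_(r < n) ('C(n, (2 * r).+2))%:R * x ^+ r.
Proof.
have -> : map_poly ratr (Op n) = \poly_(r < n) ('C(n, (2 * r).+2))%:R :> {poly algC}.
  apply/polyP => r; rewrite coef_map coefOp coef_poly.
  case: ifP => h; first exact: ratr_nat.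
  rewrite bin_small; last by lia.
  exact: ratr_nat.
by rewrite horner_poly.
Qed.

Lemma ident n (t : algC) :
  t * (map_poly ratr (Ep n)).[t ^+ 2] + t ^+ 2 * (map_poly ratr (Op n)).[t ^+ 2]
  = (t + 1) ^+ n - 1.
Proof.
rewrite hornerEC hornerOC !mulr_sumr.
pose F k := ('C(n, k.+1))%:R * t ^+ k.+1.
have -> : \sum_(r < n) t * (('C(n, (2 * r).+1))%:R * (t ^+ 2) ^+ r)
          = \sum_(r < n) F (2 * r)%N.
  by apply: eq_bigr => r _; rewrite /F -exprM mulrCA -exprS.
have -> : \sum_(r < n) t ^+ 2 * (('C(n, (2 * r).+2))%:R * (t ^+ 2) ^+ r)
          = \sum_(r < n) F (2 * r).+1.
  apply: eq_bigr => r _; rewrite /F -exprM mulrCA -exprD.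
  by rewrite (_ : (2 + 2 * r = (2 * r).+2)%N) //; lia.
rewrite -sum_split.
have -> : \sum_(k < 2 * n) F k = \sum_(k < n) F k.
  rewrite (big_ord_widen (2 * n) F (_ : n <= 2 * n)%N); last by lia.
  rewrite [LHS](bigID (fun i : 'I_(2 * n) => (i < n)%N)) /= [X in _ + X = _]big1 ?addr0 //.
  by move=> i hi; rewrite /F bin_small ?mul0r //; lia.
rewrite exprD1n big_ord_recl expr0 bin0 mulr1n [1 + _]addrC addrK.
by apply: eq_bigr => i _; rewrite /F mulr_natl lift0.
Qed.

Lemma gcd_small n : (1 <= n)%N -> (size (gcdp (Op n) (Ep n)) <= 1)%N.
Proof.
move=> hn; rewrite leqNgt; apply/negP => hg.
set g := gcdp _ _ in hg.
have : size (map_poly ratr g : {poly algC}) != 1%N.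
  by rewrite size_map_poly; apply/eqP => h; rewrite h in hg.
case/closed_rootP => z hz.
have rootE : forall p, g %| p -> (map_poly ratr p).[z] = 0 :> algC.
  by move=> p /dvdpP [q ->]; rewrite rmorphM hornerM (rootP hz) mulr0.
have hE := rootE _ (dvdp_gcdr (Op n) (Ep n)).
have hO := rootE _ (dvdp_gcdl (Op n) (Ep n)).
set t := sqrtC z.
have ht2 : t ^+ 2 = z := sqrtCK z.
have h1 := ident n t; rewrite ht2 hE hO !mulr0 addr0 in h1.
have h2 := ident n (- t); rewrite sqrrN ht2 hE hO !mulr0 addr0 in h2.
have nrm : forall u : algC, 0 = u ^+ n - 1 -> u * u^* = 1.
  move=> u hu; have : u ^+ n = 1 by apply/eqP; rewrite -subr_eq0 -hu.
  move=> /(congr1 (fun x => `|x|)); rewrite normrX normr1 => /eqP.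
  rewrite pexpr_eq1 // => /eqP hu1.
  by rewrite -normCK hu1 expr1n.
have e1 := nrm _ h1; have e2 := nrm _ h2.
rewrite !rmorphD rmorphN rmorph1 in e1 e2.
have e3 : (t * t^*) * 2 = 0.
  have : (t + 1) * (t^* + 1) + (- t + 1) * (- t^* + 1) = (t * t^*) * 2 + 2 by ring.
  rewrite e1 e2 => h; apply: (addIr 2); rewrite -h add0r //.
move/eqP: e3; rewrite mulf_eq0 pnatr_eq0 orbF mulf_eq0 conjC_eq0 orbb => /eqP t0.
move: hE; rewrite -ht2 t0 expr0n /= horner_coef0 coef_map coefEp.
move=> /eqP; rewrite fmorph_eq0 pnatr_eq0 bin1; lia.
Qed.

Lemma det_Lrat_neq0 n : (3 <= n)%N ->
  \det (\matrix_(i < n - 2, j < n - 2) Lq n i j) != 0.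
Proof.
move=> hn.
have hS : resultant (Op n) (Ep n) != 0.
  by rewrite resultant_eq0 -leqNgt gcd_small //; lia.
have hN : (n - 2 = (size (Ep n)).-1 + (size (Op n)).-1)%N.
  by rewrite sizeEp ?sizeOp /=; lia.
pose fn (i : nat) := if (i %% 2 == 1)%N then ((n - 1) %/ 2 + i %/ 2)%N else (i %/ 2)%N.
have hf : forall i : 'I_(n - 2), (fn i < n - 2)%N.
  move=> i; have := ltn_ord i; rewrite /fn; case: ifP => /eqP h; lia.
pose f (i : 'I_(n - 2)) := cast_ord hN (Ordinal (hf i)).
pose g (j : 'I_(n - 2)) := cast_ord hN j.
have finj : injective f.
  move=> i1 i2 /(congr1 val) /= h; apply/val_inj => /=; move: h.
  have := ltn_ord i1; have := ltn_ord i2.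
  rewrite /fn; case: ifP => /eqP h1; case: ifP => /eqP h2; lia.
have ginj : injective g by exact: cast_ord_inj.
rewrite (@det_reindex _ _ _ _ (Sylvester_mx (Op n) (Ep n)) _ _ finj ginj); last first.
- exact: hN.
- move=> i j; rewrite mxE Sylvester_mxE.
  have hdE : ((size (Ep n)).-1 = (n - 1) %/ 2)%N by rewrite sizeEp //; lia.
  have hdO : ((size (Op n)).-1 = (n - 2) %/ 2)%N by rewrite sizeOp //; lia.
  have hi0 := ltn_ord i; have hj0 := ltn_ord j.
  case: splitP => k /= hk; have hk0 := ltn_ord k; rewrite /fn in hk.
  + move: hk0; rewrite [X in (_ < X)%N -> _]hdE => hk0.
    set kk := nat_of_ord k in hk hk0 *.
    have hi : (i %% 2 = 0)%N.
      by move: hk; case: ifP => /eqP h; lia.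
    move: hk; rewrite ifN; last by apply/eqP; lia.
    move=> hk.
    rewrite coefOp.
    case: (leqP k j) => hkj; rewrite ?mulr1n ?mulr0n.
    * by apply: Lq_pos; rewrite /mm; lia.
    * by apply: Lq_le0; rewrite /mm; lia.
  + rewrite hdE in hk.
    move: hk0; rewrite [X in (_ < X)%N -> _]hdO => hk0.
    set kk := nat_of_ord k in hk hk0 *.
    have hi : (i %% 2 = 1)%N.
      by move: hk; case: ifP => /eqP h; lia.
    move: hk; rewrite ifT; last by apply/eqP.
    move=> hk.
    rewrite coefEp.
    case: (leqP k j) => hkj; rewrite ?mulr1n ?mulr0n.
    * by apply: Lq_pos; rewrite /mm; lia.
    * by apply: Lq_le0; rewrite /mm; lia.
by [].
Qed.


Theorem theorem5 (n : nat) (hn : (3 <= n)%N) :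
  Hminor n != 0 /\ ((size (Hminor n)).-1 = ((n - 1) * (n - 2)) %/ 2)%N.
Proof.
set N := (n - 2)%N.
set A := \matrix_(i < N, j < N) Mentry n i.+1 j.+1.
set B := \matrix_(i < N, j < N) (phi n (mm i j) * 'X^(N - 1 - i + 2 * j)).
set c := (\sum_(i < N) i)%N.
have hc := sum_id N; rewrite -/c in hc.
set s := (3 * c)%N.
have hAB : \det B = \det A * 'X^s.
  have -> : B = diag_mx (\row_i 'X^(N - 1 - i)) *m A *m diag_mx (\row_j 'X^(2 * j)).
    apply/matrixP => i j; rewrite mul_mx_diag mul_diag_mx !mxE Mentry_eq.
    have -> : (2 * ((j.+1 : nat) : int) - ((i.+1 : nat) : int) + 1) = mm i j.
      by rewrite /mm; lia.
    by rewrite exprD mulrCA mulrA.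
  rewrite !det_mulmx !det_diag.
  under eq_bigr => i _ do rewrite mxE.
  under [X in _ * _ * X]eq_bigr => i _ do rewrite mxE.
  rewrite !prodrXr sum_rev -/c mulrAC -exprD mulrC; congr (_ * _ ^+ _).
  rewrite -big_distrr /= -/c /s; lia.
set K := (2 * N - 1)%N.
set Lr := \matrix_(i < N, j < N) Lq n i j.
have ht : topc (N * K) (\det B) (\det (map_mx (@mpolyC n rat) Lr)).
  apply: topc_det => i j k hk; rewrite !mxE; exact: entry_top.
rewrite det_map_mx in ht.
have hLr : \det Lr != 0 by exact: det_Lrat_neq0.
have hsK : (s <= N * K)%N by exact: ar1.
set D := (N * K - s)%N.
have hA : forall k, (D <= k)%N -> (\det A)`_k = (k == D)%:R * (\det Lr)%:MP.
  move=> k hk.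
  have -> : (\det A)`_k = (\det B)`_(k + s).
    by rewrite hAB coefMXn ifN ?addnK //; lia.
  rewrite ht; last by lia.
  by congr (_%:R * _); apply/eqP/eqP; lia.
have hH : Hminor n = \det A by rewrite /Hminor.
have hD : (\det A)`_D != 0 by rewrite hA // eqxx mul1r mpolyC_eq0.
have hsz : size (\det A) = D.+1.
  apply/eqP; rewrite eqn_leq; apply/andP; split.
    apply/leq_sizeP => k hk; rewrite hA ?(ltnW hk) // gtn_eqF // mul0r //.
  rewrite ltnNge; apply: contra hD => /leq_sizeP h; apply/eqP; exact: h.
rewrite hH; split; first by apply: contraNneq hD => ->; rewrite coef0.
rewrite hsz /=.
have -> : ((n - 1) * N = D * 2)%N by rewrite /D /K /s; exact: ar2.
by rewrite mulnK.
Qed.
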